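(* Let $\mathcal{X}\subset\mathbb{R}^d$ be finite, $x_1,x_2\in\mathcal{X}$, $\rho=|x_1-x_2|$, $c=(x_1+x_2)/2$. If the edge $e=\{x_1,x_2\}$ is critical in the Vietoris–Rips filtration generated by $\mathcal{X}$, then no point of $\mathcal{X}$ lies in the ball $B_{(1-\sqrt3/2)\rho}(c)$.
   Context: The Vietoris–Rips complex is $\mathcal{R}_r(\mathcal{X})=\{\mathcal{I}\subseteq\mathcal{X}:|y-z|\le r\ \forall y,z\in\mathcal{I}\}$ and $B_r(c)$ is the closed Euclidean ball. The edge $e$ enters the filtration at radius $\rho$; it is critical if its insertion (together with the cliques containing it) changes reduced homology, which is the case precisely when the link $\mathrm{lk}(e)$ of $e$ in $\mathcal{R}_\rho(\mathcal{X})$ is empty or has some nonzero reduced Betti number $\beta_{k-2}(\mathrm{lk}(e))$, $k\ge2$. Here the link of a simplex $\sigma$ in a complex $K$ is $\{\tau\in\mathrm{st}_K(\sigma):\tau\cap\sigma=\emptyset\}$, with $\mathrm{st}_K(\sigma)$ the smallest subcomplex containing all simplices containing $\sigma$. *)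

(* Defs.v *)
From HB Require Import structures.
From mathcomp Require Import all_boot all_order all_algebra.
From mathcomp Require Import reals.
Set Implicit Arguments. Unset Strict Implicit. Unset Printing Implicit Defensive.
Import Order.TTheory GRing.Theory Num.Theory.
Local Open Scope ring_scope.

Definition edist (R : realType) (d : nat) (y z : 'rV[R]_d) : R :=
  Num.sqrt (\sum_(i < d) (y 0 i - z 0 i) ^+ 2).

(** Abstract simplicial complexes on a finite vertex type, as predicates on
    vertex sets (the empty simplex is allowed, as in the paper). *)

(** Vietoris--Rips complex R_r(X), X = image of the point map p. *)
Definition VR (R : realType) (d : nat) (T : finType) (p : T -> 'rV[R]_d)
  (r : R) : pred {set T} :=
  fun I => [forall y in I, forall z in I, edist (p y) (p z) <= r].

Definition star (T : finType) (K : pred {set T}) (s : {set T}) : pred {set T} :=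
  fun t => [exists u : {set T}, [&& K u, s \subset u & t \subset u]].

Definition link (T : finType) (K : pred {set T}) (s : {set T}) : pred {set T} :=
  fun t => star K s t && [disjoint t & s].

Definition face_coef (F : fieldType) (T : finType) (j i : {set T}) : F :=
  if (i \subset j) && (#|j :\: i| == 1)%N then
    if [pick v in j :\: i] is Some v then
      (-1) ^+ #|[set u in j | (enum_rank u < enum_rank v)%N]|
    else 0
  else 0.

(** Boundary matrix from simplices of K with n vertices to those with n-1
    vertices (n >= 1), all simplices of T indexed via enum_val. *)
Definition bdry_mx (F : fieldType) (T : finType) (K : pred {set T}) (n : nat)
  : 'M[F]_(#|{: {set T}}|, #|{: {set T}}|) :=
  \matrix_(a, b) (let j := enum_val a in let i := enum_val b in
     if [&& (0 < n)%N, K j, K i & #|j| == n] then face_coef F j i else 0).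

Definition nsimp (T : finType) (K : pred {set T}) (n : nat) : nat :=
  #|[set s : {set T} | K s & #|s| == n]|.

(** Reduced Betti number of K in dimension k (simplices with k+1 vertices),
    coefficients in F: dim ker d_k - rank d_(k+1). *)
Definition rbetti (F : fieldType) (T : finType) (K : pred {set T}) (k : nat)
  : nat :=
  (nsimp K k.+1 - \rank (bdry_mx F K k.+1) - \rank (bdry_mx F K k.+2))%N.

Definition critical_edge (F : fieldType) (R : realType) (d : nat) (T : finType)
  (p : T -> 'rV[R]_d) (x1 x2 : T) : Prop :=
  let rho := edist (p x1) (p x2) in
  let L := link (VR p rho) [set x1; x2] in
  (forall t, L t -> t = set0) \/
  (exists k : nat, (2 <= k)%N /\ rbetti F L (k - 2) <> 0%N).

(* Main.v *)
Require Import Defs.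
From HB Require Import structures.
From mathcomp Require Import all_boot all_order all_algebra.
From mathcomp Require Import reals ring lra zify.
Set Implicit Arguments. Unset Strict Implicit. Unset Printing Implicit Defensive.
Import Order.TTheory GRing.Theory Num.Theory.
Local Open Scope ring_scope.

Section Alg.
Variables (F : fieldType) (T : finType).
Local Notation N := #|{: {set T}}|.

Definition mxf (g : {set T} -> {set T} -> F) : 'M[F]_(N, N) :=
  \matrix_(a, b) g (enum_val a) (enum_val b).

Lemma sum_ev (G : {set T} -> F) :
  \sum_(c < N) G (enum_val c) = \sum_S G S.
Proof.
rewrite [RHS](reindex (enum_val : 'I_N -> {set T})) //.
by exists enum_rank => x _; rewrite ?enum_valK ?enum_rankK.
Qed.

Lemma mxfM g1 g2 :
  mxf g1 *m mxf g2 = mxf (fun i j => \sum_S g1 i S * g2 S j).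
Proof.
apply/matrixP => a b; rewrite !mxE.
under eq_bigr do rewrite !mxE.
exact: (sum_ev (fun S => g1 _ S * g2 S _)).
Qed.

Lemma mxfD g1 g2 : mxf g1 + mxf g2 = mxf (fun i j => g1 i j + g2 i j).
Proof. by apply/matrixP => a b; rewrite !mxE. Qed.

Lemma rank_lb g (Q : {set {set T}}) :
  (forall i j, i \in Q -> j \in Q -> g i j = (i == j)%:R) ->
  (#|Q| <= \rank (mxf g))%N.
Proof.
move=> Hg.
pose M : 'M[F]_(#|Q|, N) := \matrix_(i, a) ((enum_val a == enum_val i)%:R).
apply: (@mulmx1_min_rank _ _ _ _ (mxf g) M M^T).
have E1 i b : (M *m mxf g) i b = g (enum_val i) (enum_val b).
  rewrite mxE; under eq_bigr do rewrite !mxE.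
  rewrite (sum_ev (fun S => (S == enum_val i)%:R * g S (enum_val b))).
  rewrite (bigD1 (enum_val i)) //= eqxx mul1r big1 ?addr0 // => S /negbTE ->.
  by rewrite mul0r.
apply/matrixP => i j; rewrite !mxE.
under eq_bigr do rewrite E1 !mxE.
rewrite (sum_ev (fun S => g (enum_val i) S * (S == enum_val j)%:R)).
rewrite (bigD1 (enum_val j)) //= eqxx mulr1 big1 ?addr0; last first.
  by move=> S /negbTE ->; rewrite mulr0.
by rewrite Hg ?enum_valP // (inj_eq enum_val_inj).
Qed.

Definition sgn (j : {set T}) (v : T) : F :=
  (-1) ^+ #|[set u in j | (enum_rank u < enum_rank v)%N]|.

Lemma fc_nz (j i : {set T}) : face_coef F j i != 0 -> exists2 v, v \in j & i = j :\ v.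
Proof.
rewrite /face_coef; case: ifP => [/andP[sij /cards1P [v Ev]]|]; last by rewrite eqxx.
have : v \in j :\: i by rewrite Ev (set11 v).
rewrite inE => /andP[vi vj] _; exists v => //.
apply/setP => u; rewrite !inE.
have := congr1 (fun S : {set T} => u \in S) Ev; rewrite /= !inE.
case: (boolP (u \in i)) => ui /=.
  by move=> <-; rewrite (subsetP sij).
by move=> ->; case: eqP.
Qed.

Lemma fcE (j : {set T}) v : v \in j -> face_coef F j (j :\ v) = sgn j v.
Proof.
move=> vj; rewrite /face_coef subD1set /=.
have -> : j :\: (j :\ v) = [set v].
  by apply/setP => u; rewrite !inE; case: (eqVneq u v) => [->|]; rewrite ?vj //=; case: (u \in j).
rewrite cards1 eqxx /=.
case: pickP => [w|/(_ v)]; rewrite !inE ?eqxx //.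
by move/eqP ->.
Qed.

Lemma sgn_sq (j : {set T}) v : sgn j v * sgn j v = 1.
Proof. by rewrite /sgn -exprD -signr_odd oddD addbb. Qed.

Lemma sgn_neq0 (j : {set T}) v : sgn j v != 0.
Proof.
apply/eqP => h; have := sgn_sq j v; rewrite h mul0r => /eqP; by rewrite eq_sym oner_eq0.
Qed.

Lemma cnt_U1 w (S : {set T}) (P : pred T) : w \notin S ->
  #|[set u in w |: S | P u]| = (#|[set u in S | P u]| + P w)%N.
Proof.
move=> wS; case: (boolP (P w)) => Pw.
  have -> : [set u in w |: S | P u] = w |: [set u in S | P u].
    by apply/setP => u; rewrite !inE; case: eqP => // ->; rewrite Pw.
  by rewrite cardsU1 !inE (negbTE wS) /= add1n addn1.
have -> : [set u in w |: S | P u] = [set u in S | P u].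
  by apply/setP => u; rewrite !inE; case: eqP => // ->; rewrite (negbTE Pw) (negbTE wS).
by rewrite addn0.
Qed.

Lemma sgnU1 w (S : {set T}) v : w \notin S ->
  sgn (w |: S) v = sgn S v * (-1) ^+ (enum_rank w < enum_rank v)%N.
Proof.
move=> wS; rewrite /sgn.
by rewrite (cnt_U1 (fun u => (enum_rank u < enum_rank v)%N)) // exprD.
Qed.

Lemma sgn_id y (s : {set T}) v : y \notin s -> v \in s -> v != y ->
  sgn (y |: s) y * sgn (y |: s) v + sgn s v * sgn (y |: (s :\ v)) y = 0.
Proof.
move=> ys vs vy.
set S := s :\ v.
have eS : s = v |: S by rewrite setD1K.
have vS : v \notin S by rewrite setD11.
have yS : y \notin S by rewrite !inE negb_and ys orbT.
have yvS : y \notin v |: S by rewrite !inE negb_or eq_sym vy.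
rewrite [in LHS]eS !sgnU1 //.
rewrite !ltnn !expr0 !mulr1.
case: (ltngtP (enum_rank v) (enum_rank y)) => [h|h|/val_inj/enum_rank_inj e].
- by rewrite /= expr1 expr0; ring.
- by rewrite /= expr1 expr0; ring.
- by move: vy; rewrite e eqxx.
Qed.


Variables (K : pred {set T}) (y : T).
Hypothesis cone : forall t, K t -> K (y |: t).
Hypothesis down : forall t t' : {set T}, K t -> t' \subset t -> K t'.

Definition bd n := fun j i : {set T} =>
  if [&& (0 < n)%N, K j, K i & #|j| == n] then face_coef F j i else 0.
Definition hh := fun s t : {set T} =>
  if [&& K s, y \notin s & t == y |: s] then face_coef F t s else 0.

Lemma bdE n : bdry_mx F K n = mxf (bd n).
Proof. by []. Qed.

Lemma bdT n j i : (0 < n)%N -> K j -> K i -> #|j| = n -> bd n j i = face_coef F j i.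
Proof. by move=> n0 Kj Ki cj; rewrite /bd n0 Kj Ki cj eqxx. Qed.

Lemma key n s r : (0 < n)%N -> K s -> K r -> #|s| = n -> #|r| = n ->
  \sum_S hh s S * bd n.+1 S r + \sum_S bd n s S * hh S r = (s == r)%:R.
Proof.
move=> n0 Ks Kr cs cr.
have E1 : \sum_S hh s S * bd n.+1 S r =
    if y \in s then 0 else face_coef F (y |: s) s * bd n.+1 (y |: s) r.
  case: ifP => ys.
    by rewrite big1 // => S _; rewrite /hh ys andbF mul0r.
  rewrite (bigD1 (y |: s)) //= big1 ?addr0 /hh ?Ks ?ys ?eqxx //.
  by move=> S /negbTE; rewrite eq_sym => ->; rewrite !andbF mul0r.
have E2 : \sum_S bd n s S * hh S r =
    if y \in r then bd n s (r :\ y) * face_coef F r (r :\ y) else 0.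
  case: ifP => yr.
    have Kr' : K (r :\ y) by apply: down Kr (subD1set _ _).
    rewrite (bigD1 (r :\ y)) //= big1 ?addr0 /hh ?Kr' ?setD11 ?setD1K ?eqxx //.
    move=> S SD; case: ifP; last by rewrite mulr0.
    case/and3P => _ yS /eqP rE; move: SD; by rewrite rE setU1K // eqxx.
  rewrite big1 // => S _; rewrite /hh.
  case: ifP; last by rewrite mulr0.
  by case/and3P => _ _ /eqP rE; move: yr; rewrite rE setU11.
rewrite E1 E2.
have cU : forall t : {set T}, y \notin t -> #|y |: t| = #|t|.+1.
  by move=> t yt; rewrite cardsU1 yt.
case: (eqVneq s r) => [<-|sr].
  case: ifP => ys.
    rewrite add0r bdT ?(down Ks (subD1set _ _)) //.
    by rewrite fcE // sgn_sq.
  rewrite addr0 bdT ?cone ?cU ?(negbT ys) ?cs //.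
  have := fcE (setU11 y s); rewrite setU1K ?(negbT ys) // => ->.
  exact: sgn_sq.
case: ifP => ys.
  rewrite add0r; case: ifP => yr //.
  rewrite bdT ?(down Kr (subD1set _ _)) //.
  case: (eqVneq (face_coef F s (r :\ y)) 0) => [->|/fc_nz [v vs e]]; first by rewrite mul0r.
  have vy : v = y.
    apply/eqP; apply: contraT => vy.
    have : y \in s :\ v by rewrite !inE eq_sym vy ys.
    by rewrite -e setD11.
  move: e; rewrite vy => e.
  by move: sr; rewrite -(setD1K ys) -e setD1K // eqxx.
have ys' := negbT ys.
rewrite bdT ?cone ?cU ?cs //.
case: (eqVneq (face_coef F (y |: s) r) 0) => [z|/fc_nz [v vys e]].
  rewrite z mulr0 add0r; case: ifP => yr //.
  rewrite bdT ?(down Kr (subD1set _ _)) //.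
  case: (eqVneq (face_coef F s (r :\ y)) 0) => [->|/fc_nz [v vs e]]; first by rewrite mul0r.
  have vy : v != y by apply: contraNneq ys' => <-.
  have er : r = (y |: s) :\ v.
    rewrite -(setD1K yr) e; apply/setP => u; rewrite !inE.
    by case: (eqVneq u y) => [->|]; rewrite /= ?(eq_sym y v) ?vy.
  move: z; rewrite er fcE; last by rewrite !inE vs orbT.
  by move/eqP; rewrite (negbTE (sgn_neq0 _ _)).
have vy : v != y.
  apply: contraNneq sr => vy; by rewrite e vy setU1K.
have vs : v \in s by move: vys; rewrite !inE (negbTE vy).
have er : r = y |: (s :\ v).
  rewrite e; apply/setP => u; rewrite !inE.
  by case: (eqVneq u y) => [->|]; rewrite /= ?(eq_sym y v) ?vy ?andbT.
have yr : y \in r by rewrite er setU11.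
have er' : r :\ y = s :\ v by rewrite er setU1K // !inE ys andbF.
rewrite yr er' bdT ?(down Ks (subD1set _ _)) //.
have f1 : face_coef F (y |: s) s = sgn (y |: s) y.
  by have := fcE (setU11 y s); rewrite setU1K.
have f2 : face_coef F (y |: s) r = sgn (y |: s) v by rewrite e fcE.
have f3 : face_coef F r (s :\ v) = sgn r y by rewrite -er' fcE.
rewrite f1 f2 f3 fcE // er.
exact: sgn_id.

Qed.

Lemma betti0 m : rbetti F K m = 0%N.
Proof.
rewrite /rbetti.
suff : (nsimp K m.+1 <= \rank (bdry_mx F K m.+1) + \rank (bdry_mx F K m.+2))%N by lia.
set A := bdry_mx F K m.+2; set B := bdry_mx F K m.+1.
pose H := mxf hh.
have h1 : (nsimp K m.+1 <= \rank (H *m A + B *m H)%R)%N.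
  rewrite /A /B /H !bdE !mxfM mxfD.
  apply: rank_lb => i j; rewrite !inE => /andP[Ki /eqP ci] /andP[Kj /eqP cj].
  exact: key.
apply: (leq_trans h1); apply: (leq_trans (mxrank_add _ _)).
rewrite addnC; apply: leq_add; [exact: mxrankM_maxl | exact: mxrankM_maxr].
Qed.

End Alg.

Section Geo.
Variables (R : realType) (d : nat).
Implicit Types a b c : 'rV[R]_d.

Definition sqd a b := \sum_(i < d) (a 0 i - b 0 i) ^+ 2.

Lemma sqd_ge0 a b : 0 <= sqd a b.
Proof. by apply: sumr_ge0 => i _; rewrite sqr_ge0. Qed.

Lemma sqdC a b : sqd a b = sqd b a.
Proof. by apply: eq_bigr => i _; rewrite -sqrrN opprB. Qed.

Lemma sqd_xx a : sqd a a = 0.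
Proof. by rewrite /sqd big1 // => i _; rewrite subrr expr0n. Qed.

Lemma sqd_mid a x1 x2 :
  sqd a (2^-1 *: (x1 + x2)) = (sqd a x1 + sqd a x2) / 2 - sqd x1 x2 / 4.
Proof.
rewrite /sqd mulrDl !mulr_suml -big_split -sumrB /=.
by apply: eq_bigr => i _; rewrite !mxE; field.
Qed.

Lemma geo (s D : R) a c y : s ^+ 2 = 3 -> 0 <= s ->
  sqd a c <= 3 / 4 * D -> sqd y c <= (1 - s / 2) ^+ 2 * D -> sqd y a <= D.
Proof.
move=> s2 s0 ha hy.
have s3 : s ^+ 3 = 3 * s by rewrite exprS s2 mulrC.
have s32 : 3 / 2 < s by nra.
set al := (2 * s - 3) / 3.
have al0 : 0 < al by rewrite /al; lra.
have pt : forall i, al * (y 0 i - a 0 i) ^+ 2 <=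
    al * (al + 1) * (a 0 i - c 0 i) ^+ 2 + (al + 1) * (y 0 i - c 0 i) ^+ 2.
  move=> i; rewrite -subr_ge0.
  have -> : al * (al + 1) * (a 0 i - c 0 i) ^+ 2 + (al + 1) * (y 0 i - c 0 i) ^+ 2
     - al * (y 0 i - a 0 i) ^+ 2 = (al * (a 0 i - c 0 i) + (y 0 i - c 0 i)) ^+ 2 by ring.
  exact: sqr_ge0.
have hs : al * sqd y a <= al * (al + 1) * sqd a c + (al + 1) * sqd y c.
  rewrite /sqd !mulr_sumr -big_split /=; apply: ler_sum => i _; exact: pt.
have D0 : 0 <= D.
  have := le_trans (sqd_ge0 _ _) ha; rewrite pmulr_rge0 //; lra.
have id : al * (al + 1) * (3 / 4) + (al + 1) * (1 - s / 2) ^+ 2 = al.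
  have e : al * (al + 1) * (3 / 4) + (al + 1) * (1 - s / 2) ^+ 2 - al =
    (s ^+ 2 - 3) * (- 1 / 3) + (s ^+ 3 - 3 * s) * (1 / 6) by rewrite /al; field.
  by apply/eqP; rewrite -subr_eq0 e s2 s3 !subrr !mul0r addr0.
have h2 : al * (al + 1) * sqd a c + (al + 1) * sqd y c <=
    al * (al + 1) * (3 / 4 * D) + (al + 1) * ((1 - s / 2) ^+ 2 * D).
  by apply: lerD; apply: ler_wpM2l => //; try apply: mulr_ge0; lra.
have e2 : al * (al + 1) * (3 / 4 * D) + (al + 1) * ((1 - s / 2) ^+ 2 * D) = al * D.
  by rewrite -[in RHS]id; ring.
have : al * sqd y a <= al * D by rewrite -e2; exact: le_trans hs h2.
by rewrite ler_pM2l.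
Qed.

End Geo.

Lemma VRP (R : realType) (d : nat) (T : finType) (p : T -> 'rV[R]_d) r (I : {set T}) :
  reflect (forall a b, a \in I -> b \in I -> edist (p a) (p b) <= r) (VR p r I).
Proof.
apply: (iffP forall_inP) => [h a b aI bI | h a aI].
  exact: (forall_inP (h a aI)).
by apply/forall_inP => b bI; exact: h.
Qed.

Lemma VR_sub (R : realType) (d : nat) (T : finType) (p : T -> 'rV[R]_d) r (I J : {set T}) :
  VR p r I -> J \subset I -> VR p r J.
Proof.
move=> /VRP h JI; apply/VRP => a b aJ bJ; apply: h; exact: (subsetP JI).
Qed.

Lemma linkE (R : realType) (d : nat) (T : finType) (p : T -> 'rV[R]_d) r (s t : {set T}) :
  link (VR p r) s t = VR p r (s :|: t) && [disjoint t & s].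
Proof.
rewrite /link /star; congr andb.
apply/existsP/idP => [[u /and3P[Ku su tu]]|h].
  by apply: VR_sub Ku _; rewrite subUset su tu.
by exists (s :|: t); rewrite h subsetUl subsetUr.
Qed.

Unset Implicit Arguments.

Theorem lemmaC1 (F : fieldType) (R : realType) (d : nat) (T : finType)
  (p : T -> 'rV[R]_d) (p_inj : injective p) (x1 x2 : T) (hx : x1 != x2) :
  critical_edge F p x1 x2 ->
  forall y : T,
    ~ (edist (p y) (2^-1 *: (p x1 + p x2))
        <= (1 - Num.sqrt 3 / 2) * edist (p x1) (p x2)).
Proof.
move=> crit y Hy.
set c := 2^-1 *: (p x1 + p x2) in Hy.
set D := sqd (p x1) (p x2).
have rhoE : edist (p x1) (p x2) = Num.sqrt D by [].
set s := Num.sqrt 3 in Hy.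
have s2 : s ^+ 2 = 3 by rewrite sqr_sqrtr.
have s0 : 0 <= s by exact: sqrtr_ge0.
have s1 : 1 < s by nra.
have s22 : s < 2 by nra.
have D0 : 0 < D.
  rewrite lt_def sqd_ge0 andbT; apply/negP => /eqP D0.
  have h := psumr_eq0P (fun i _ => sqr_ge0 (p x1 0 i - p x2 0 i)) D0.
  suff : p x1 = p x2 by move/p_inj/eqP; rewrite (negbTE hx).
  apply/rowP => i; have /eqP := h i isT; rewrite sqrf_eq0 subr_eq0 => /eqP.
  by move=> ->.
have ed_le a b : (edist a b <= Num.sqrt D) = (sqd a b <= D).
  by rewrite /edist ler_sqrt // ltW.
have Hy2 : sqd (p y) c <= (1 - s / 2) ^+ 2 * D.
  have e : (1 - s / 2) * Num.sqrt D = Num.sqrt ((1 - s / 2) ^+ 2 * D).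
    rewrite sqrtrM ?sqr_ge0 // sqrtr_sqr ger0_norm //; lra.
  move: Hy; rewrite rhoE e /edist ler_sqrt //.
  by apply: mulr_ge0; [exact: sqr_ge0 | exact: ltW].
have near a : sqd a (p x1) <= D -> sqd a (p x2) <= D -> sqd (p y) a <= D.
  move=> h1 h2; apply: (geo s2 s0 _ Hy2).
  rewrite /c sqd_mid -/D; lra.
have yx a : a \in [set x1; x2] -> y != a.
  rewrite !inE => ha; apply/eqP => ya; subst a.
  have : sqd (p y) c <= (1 - s / 2) ^+ 2 * D by [].
  have : sqd (p y) c = D / 4.
    case/orP: ha => /eqP ->; rewrite /c sqd_mid sqd_xx ?[sqd (p x2) (p x1)]sqdC -/D; lra.
  move=> -> h.
  have q : 0 < (1 / 4 - (1 - s / 2) ^+ 2) * D by apply: mulr_gt0 => //; nra.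
  lra.
set S2 := [set x1; x2].
set L := link (VR p (edist (p x1) (p x2))) S2.
have Ldown (t t' : {set T}) : L t -> t' \subset t -> L t'.
  rewrite /L !linkE => /andP[h1 h2] sub; apply/andP; split.
    by apply: VR_sub h1 _; apply: setUS.
  exact: disjointWl sub h2.
have Lcone (t : {set T}) : L t -> L (y |: t).
  rewrite /L !linkE => /andP[h1 h2]; apply/andP; split; last first.
    apply/pred0P => a /=; rewrite in_setU1; case: (eqVneq a y) => [->|_] /=.
      by apply/negP => yS; move: (yx y yS); rewrite eqxx.
    by case ta: (a \in t) => //=; rewrite (disjointFr h2 ta).
  have x1S : x1 \in S2 :|: t by rewrite !inE eqxx.
  have x2S : x2 \in S2 :|: t by rewrite !inE eqxx orbT.
  have bnd (b : T) : b \in S2 :|: t -> sqd (p y) (p b) <= D.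
    move=> bS; apply: near.
      by rewrite -ed_le -rhoE; move/VRP: h1; apply.
    by rewrite -ed_le -rhoE; move/VRP: h1; apply.
  have mem (a : T) : a \in S2 :|: (y |: t) -> (a = y) \/ (a \in S2 :|: t).
    rewrite !inE; case: (eqVneq a y) => [->|_]; first by left.
    by rewrite /= => h; right.
  apply/VRP => a b /mem [->|aS] /mem [->|bS]; rewrite rhoE ed_le.
  - by rewrite sqd_xx ltW.
  - exact: bnd.
  - by rewrite sqdC; exact: bnd.
  - by rewrite -ed_le -rhoE; move/VRP: h1; apply.
have L0 : L set0.
  rewrite /L linkE setU0; apply/andP; split.
    apply/VRP => a b; rewrite !inE => /orP[]/eqP-> /orP[]/eqP->;
      rewrite rhoE ed_le; first [by rewrite sqd_xx ltW | by rewrite lexx | by rewrite sqdC lexx].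
  by apply/pred0P => a; rewrite /= !inE.
move: crit; rewrite /critical_edge /= -/S2 -/L => -[H0|[k [_ Hk]]].
  have := H0 _ (Lcone _ L0); rewrite setU0 => /setP/(_ y).
  by rewrite !inE eqxx.
by apply: Hk; apply: (betti0 F Lcone Ldown).
Qed.
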